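(* Let $(\mathfrak H_{-,+},\mathfrak H,G,W)$ be a reduction tuple for $A^*$, and define $\Gamma_0\psi:=G\psi_2$ and $\Gamma_1\psi:=\mathrm iWG\psi_1$ for $\psi=\{\psi_1,\psi_2\}\in(\mathrm{dom}A^* )^2$. Then $(\mathfrak H_{-,+},\mathfrak H,\Gamma_0,\Gamma_1)$ is an m-boundary tuple for $M^*$.
   Context: $A$ is a closed densely defined symmetric operator in a Hilbert space $\mathfrak X$; $S$ a bounded uniformly positive selfadjoint operator in $\mathfrak X\oplus\mathfrak X$; $\mathfrak X^{2,S}$ is $\mathfrak X\oplus\mathfrak X$ with the inner product $(S\cdot|\cdot)_{\mathfrak X^2}$. $M\{\psi_1,\psi_2\}:=S^{-1}\{\mathrm iA\psi_2,-\mathrm iA\psi_1\}$ on $(\mathrm{dom}A)^2$ is closed symmetric in $\mathfrak X^{2,S}$ with adjoint $M^*\{\psi_1,\psi_2\}=S^{-1}\{\mathrm iA^*\psi_2,-\mathrm iA^*\psi_1\}$ on $(\mathrm{dom}A^* )^2$. Mixed-order duality: Hilbert spaces $\mathfrak H,\mathfrak H_{-,+},\mathfrak H_{+,-}$ with $\widetilde{\mathfrak H}_{\mp,\pm}:=\mathfrak H\cap\mathfrak H_{\mp,\pm}$ dense in $\mathfrak H$ and $\mathfrak H_{\mp,\pm}$, forms $\|h\|^2_{\mathfrak H_{\mp,\pm}}$ on $\widetilde{\mathfrak H}_{\mp,\pm}$ closed in $\mathfrak H$, and $\|h\|_{\mathfrak H_{\pm,\mp}}=\sup_{0\ne g\in\widetilde{\mathfrak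 H}_{\mp,\pm}}|(g|h)_{\mathfrak H}|/\|g\|_{\mathfrak H_{\mp,\pm}}$ for $h\in\widetilde{\mathfrak H}_{\pm,\mp}$. $\langle\cdot|\cdot\rangle_{\mathfrak H}$ is the unique bounded sesquilinear extension of $(\cdot|\cdot)_{\mathfrak H}$ to $\mathfrak H_{-,+}\times\mathfrak H_{+,-}$, with $\langle h_{+,-}|h_{-,+}\rangle_{\mathfrak H}:=\overline{\langle h_{-,+}|h_{+,-}\rangle_{\mathfrak H}}$. A reduction tuple for $A^*$: $G:\mathrm{dom}A^*\to\mathfrak H_{-,+}$ linear surjective, $W:\mathfrak H_{-,+}\to\mathfrak H_{+,-}$ a linear homeomorphism, and $(A^*f|g)_{\mathfrak X}-(f|A^*g)_{\mathfrak X}=\langle Gf|WGg\rangle_{\mathfrak H}$ for $f,g\in\mathrm{dom}A^*$. An m-boundary tuple for a closed densely defined symmetric $\mathcal A$'s adjoint $\mathcal A^*$ (here $\mathcal A=M$ in $\mathfrak X^{2,S}$) is $(\mathfrak H_{-,+},\mathfrak H,\Gamma_0,\Gamma_1)$ with linear $\Gamma_0:\mathrm{dom}\mathcal A^*\to\mathfrak H_{-,+}$, $\Gamma_1:\mathrm{dom}\mathcal A^*\to\mathfrak H_{+,-}$ such that (M1) $f\mapsto\{\Gamma_0f,\Gamma_1f\}$ maps $\mathrm{dom}\mathcal A^*$ onto $\mathfrak H_{-,+}\oplus\mathfrak H_{+,-}$ and (M2) $(\mathcal A^*f|g)-(f|\mathcal A^*g)=\langle\Gamma_1f|\Gamma_0g\rangle_{\mathfrak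 H}-\langle\Gamma_0f|\Gamma_1g\rangle_{\mathfrak H}$ for all $f,g\in\mathrm{dom}\mathcal A^*$. *)

(* Defs.v *)
(* purely algebraic rendering of the Hilbert-space setting. *)
From HB Require Import structures.
From mathcomp Require Import all_boot all_order all_algebra.
Set Implicit Arguments. Unset Strict Implicit. Unset Printing Implicit Defensive.
Import Order.TTheory GRing.Theory Num.Theory Num.Syntax.
Local Open Scope ring_scope.

Section Defs.
Variable C : numClosedFieldType.

(* A (possibly non-complete) inner product, linear in the first argument,
   conjugate-linear in the second. *)
Definition inner_product (X : lmodType C) (ip : X -> X -> C) : Prop :=
  [/\ (forall (a : C) (x y z : X), ip (a *: x + y) z = a * ip x z + ip y z),
      (forall x y : X, ip y x = (ip x y)^*),
      (forall x : X, 0 <= ip x x)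
    & (forall x : X, ip x x = 0 -> x = 0)].

Definition subspace (X : lmodType C) (D : X -> Prop) : Prop :=
  D 0 /\ forall (a : C) (x y : X), D x -> D y -> D (a *: x + y).

Definition linear_on (X Y : lmodType C) (D : X -> Prop) (f : X -> Y) : Prop :=
  forall (a : C) (x y : X), D x -> D y -> f (a *: x + y) = a *: f x + f y.

Definition linear_map (X Y : lmodType C) (f : X -> Y) : Prop :=
  linear_on (fun _ => True) f.

Definition ip2 (X : lmodType C) (ip : X -> X -> C) (u v : X * X) : C :=
  ip u.1 v.1 + ip u.2 v.2.

Definition ipS (X : lmodType C) (ip : X -> X -> C) (S : X * X -> X * X)
  (u v : X * X) : C := ip2 ip (S u) v.

Definition is_adjoint (X : lmodType C) (ip : X -> X -> C)
  (domA : X -> Prop) (A : X -> X) (domAs : X -> Prop) (As : X -> X) : Prop :=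
  forall f h : X,
    (domAs f /\ As f = h) <-> (forall g, domA g -> ip (A g) f = ip g h).

(* Mstar: the adjoint M^* of M, given by the formula S^{-1} {i As psi2, - i As psi1}, on (dom As)^2 *)
Definition Mstar (X : lmodType C) (Sinv : X * X -> X * X) (As : X -> X)
  (psi : X * X) : X * X :=
  Sinv ('i *: As psi.2, - ('i *: As psi.1)).

Definition dom2 (X : Type) (D : X -> Prop) (psi : X * X) : Prop :=
  D psi.1 /\ D psi.2.

Definition pairing_rev (Hmp Hpm : Type) (pair : Hmp -> Hpm -> C)
  (k : Hpm) (h : Hmp) : C := (pair h k)^*.

Definition reduction_tuple (X Hmp Hpm : lmodType C) (ip : X -> X -> C)
  (domAs : X -> Prop) (As : X -> X) (pair : Hmp -> Hpm -> C)
  (G : X -> Hmp) (W : Hmp -> Hpm) : Prop :=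
  [/\ linear_on domAs G,
      (forall h : Hmp, exists f, domAs f /\ G f = h),
      linear_map W, bijective W
    & (forall f g, domAs f -> domAs g ->
        ip (As f) g - ip f (As g) = pair (G f) (W (G g)))].

Definition m_boundary_tuple (V Hmp Hpm : Type) (ipT : V -> V -> C)
  (domT : V -> Prop) (T : V -> V) (pair : Hmp -> Hpm -> C)
  (Gamma0 : V -> Hmp) (Gamma1 : V -> Hpm) : Prop :=
  (forall (h : Hmp) (k : Hpm), exists f, domT f /\ Gamma0 f = h /\ Gamma1 f = k)
  /\ (forall f g, domT f -> domT g ->
        ipT (T f) g - ipT f (T g)
        = pairing_rev pair (Gamma1 f) (Gamma0 g) - pair (Gamma0 f) (Gamma1 g)).

End Defs.

(* Main.v *)
Require Import Defs.
From HB Require Import structures.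
From mathcomp Require Import all_boot all_order all_algebra.
From mathcomp Require Import ring.
Import Order.TTheory GRing.Theory Num.Theory Num.Syntax.
Local Open Scope ring_scope.

Theorem proposition6p1
  (C : numClosedFieldType) (X Hmp Hpm : lmodType C)
  (ip : X -> X -> C)
  (domA : X -> Prop) (A : X -> X) (domAs : X -> Prop) (As : X -> X)
  (S Sinv : X * X -> X * X)
  (pair : Hmp -> Hpm -> C) (G : X -> Hmp) (W : Hmp -> Hpm) :
  inner_product ip ->
  (* A : densely defined (dense domain not expressed) symmetric, with adjoint A^* *)
  subspace domA -> linear_on domA A ->
  (forall f g, domA f -> domA g -> ip (A f) g = ip f (A g)) ->
  subspace domAs -> linear_on domAs As ->
  is_adjoint ip domA A domAs As ->
  (* S : bounded, uniformly positive, selfadjoint, with inverse Sinv *)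
  linear_map S ->
  (forall u v, ip2 ip (S u) v = ip2 ip u (S v)) ->
  (exists K : C, forall u, ip2 ip (S u) (S u) <= K * ip2 ip u u) ->
  (exists c : C, 0 < c /\ forall u, c * ip2 ip u u <= ip2 ip (S u) u) ->
  cancel S Sinv -> cancel Sinv S ->
  (* the duality pairing : sesquilinear (linear in 1st, antilinear in 2nd) *)
  (forall (a : C) h1 h2 k, pair (a *: h1 + h2) k = a * pair h1 k + pair h2 k) ->
  (forall (a : C) h k1 k2, pair h (a *: k1 + k2) = a^* * pair h k1 + pair h k2) ->
  reduction_tuple ip domAs As pair G W ->
  m_boundary_tuple (ipS ip S) (dom2 domAs) (Mstar Sinv As) pair
    (fun psi => G psi.2) (fun psi => 'i *: W (G psi.1)).
Proof.
move=> [ipl ipc ip0 ipd] _ _ _ _ _ _ _ Ssa _ _ SK KS pl pr [Gl Gs Wl [Wi WK KW] Gr].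
have ip00 : forall z, ip 0 z = 0.
  move=> z; have := ipl 1 0 0 z; rewrite scale1r addr0 mul1r => H.
  by apply: (addrI (ip 0 z)); rewrite addr0 -H.
have ipZ : forall a x z, ip (a *: x) z = a * ip x z.
  by move=> a x z; have := ipl a x 0 z; rewrite addr0 ip00 addr0.
have ipZr : forall a x z, ip z (a *: x) = a^* * ip z x.
  by move=> a x z; rewrite ipc ipZ rmorphM /= -ipc.
have ipN : forall x z, ip (- x) z = - ip x z.
  by move=> x z; rewrite -scaleN1r ipZ mulN1r.
have ipNr : forall x z, ip z (- x) = - ip z x.
  by move=> x z; rewrite ipc ipN rmorphN /= -ipc.
have p0 : forall h, pair h 0 = 0.
  move=> h; have := pr 1 h 0 0; rewrite scale1r addr0 rmorph1 mul1r => H.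
  by apply: (addrI (pair h 0)); rewrite addr0 -H.
have pZr : forall a h k, pair h (a *: k) = a^* * pair h k.
  by move=> a h k; have := pr a h k 0; rewrite addr0 p0 addr0.
have Si : forall u v, ip2 ip u (S (Sinv v)) = ip2 ip u v by move=> u v; rewrite KS.
split.
  move=> h k.
  have [f1 [d1 e1]] := Gs (Wi (- ('i *: k))).
  have [f2 [d2 e2]] := Gs h.
  exists (f1, f2); split; first by split.
  split => //=.
  rewrite e1 KW scalerN scalerA -expr2 sqrCi scaleN1r opprK //.
move=> [f1 f2] [g1 g2] [/= d1 d2] [/= e1 e2].
rewrite /ipS /Mstar KS Ssa KS /ip2 /= /pairing_rev.
rewrite pZr ipZ ipN ipZr ipNr !pZr !rmorphM /= conjCi.
rewrite !ipZ !ipZr !conjCi ?opprK -!Gr // rmorphB /= -!ipc.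
rewrite rmorphN /= conjCi; ring.
Qed.
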